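(* Let $Z$ be any infinite discrete space. Then the remainder $\beta Z\setminus Z$ is not a $\Delta$-space.
   Context: $\beta Z$ is the Stone–Čech compactification of $Z$. A topological space $X$ is a $\Delta$-space if for every decreasing sequence $\{D_n:n\in\omega\}$ of subsets of $X$ with $\bigcap_n D_n=\emptyset$ there is a decreasing sequence $\{V_n:n\in\omega\}$ of open subsets of $X$ with $D_n\subseteq V_n$ for all $n$ and $\bigcap_n V_n=\emptyset$. *)

(* Defs.v *)
From HB Require Import structures.
From mathcomp Require Import all_boot all_algebra.
From mathcomp Require Import all_classical all_reals all_analysis.

Set Implicit Arguments.
Unset Strict Implicit.
Unset Printing Implicit Defensive.

Local Open Scope classical_set_scope.

Definition rel_open (T : topologicalType) (A V : set T) : Prop :=
  exists W : set T, open W /\ V = W `&` A.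

Definition Delta_subspace (T : topologicalType) (X : set T) : Prop :=
  forall D : nat -> set T,
    (forall n, D n `<=` X) ->
    (forall n, D n.+1 `<=` D n) ->
    \bigcap_n D n = set0 ->
    exists V : nat -> set T,
      [/\ forall n, V n `<=` X,
          forall n, rel_open X (V n),
          forall n, V n.+1 `<=` V n,
          forall n, D n `<=` V n
        & \bigcap_n V n = set0].

Definition is_stone_cech (Z K : topologicalType) (e : Z -> K) : Prop :=
  [/\ compact [set: K],
      hausdorff_space K,
      [/\ injective e,
          continuous e
        & forall U : set Z, open U -> rel_open (range e) (e @` U)],
      dense (range e)
    & forall (Y : topologicalType) (f : Z -> Y),
        compact [set: Y] -> hausdorff_space Y -> continuous f ->
        exists F : K -> Y, continuous F /\ (forall z, F (e z) = f z)].

(* Main.v *)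
Require Import Defs.
From HB Require Import structures.
From mathcomp Require Import all_boot all_algebra.
From mathcomp Require Import all_classical all_reals all_analysis.
From mathcomp Require Import zify.
Local Open Scope classical_set_scope.
Fixpoint digit (k i : nat) : bool := if i is i'.+1 then digit k./2 i' else odd k.
Definition bits (k : nat) : cantor_space := fun i => digit k i.

Fixpoint build (x : nat -> bool) (m n : nat) : nat :=
  if m is m'.+1 then x 0%N + (build (fun i => x i.+1) m' n).*2 else n.

Lemma build_digit m : forall x n i, (i < m)%N -> digit (build x m n) i = x i.
Proof.
elim: m => [|m IH] x n [|i] //= Hi.
- by rewrite oddD odd_double addbF; case: (x 0%N).
- by rewrite half_bit_double IH.
Qed.

Lemma build_ge m : forall x n, (n <= build x m n)%N.
Proof.
elim: m => [|m IH] x n //=.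
have h := IH (fun i => x i.+1) n.
rewrite -addnn; lia.
Qed.

Lemma digit_inj k l : (forall i, digit k i = digit l i) -> k = l.
Proof.
have H : forall N k l, (k <= N)%N -> (l <= N)%N -> (forall i, digit k i = digit l i) -> k = l.
  elim=> [|N IH] {}k {}l.
  - by rewrite !leqn0 => /eqP -> /eqP ->.
  - move=> hk hl hd.
    have e1 : k./2 = l./2.
      apply: IH; [| |by move=> i; exact: (hd i.+1)].
      + by rewrite leq_half_double; apply: leq_trans hk _; rewrite ltnS -addnn leq_addr.
      + by rewrite leq_half_double; apply: leq_trans hl _; rewrite ltnS -addnn leq_addr.
    by rewrite -[k]odd_double_half -[l]odd_double_half e1; have := hd 0%N; rewrite /= => ->.
by move=> hd; exact: (H (maxn k l) k l (leq_maxl k l) (leq_maxr k l) hd).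
Qed.

Lemma cantor_cyl (x : cantor_space) (U : set cantor_space) : nbhs x U ->
  exists m, forall y : cantor_space, (forall i, (i < m)%N -> y i = x i) -> U y.
Proof.
move=> Ux; apply: contrapT => /forallNP H.
have H' : forall m, exists y : cantor_space,
    (forall i, (i < m)%N -> y i = x i) /\ ~ U y.
  move=> m; have /existsNP [y /not_implyP [h1 h2]] := H m; by exists y.
pose y m := projT1 (cid (H' m)).
have cv : y @ \oo --> x.
  apply/pointwise_cvgP => t A /= /nbhs_singleton Axt.
  exists t.+1 => // m /= hm.
  by have [h _] := projT2 (cid (H' m)); rewrite /y h.
have [N _ hN] := cv _ Ux.
have [_ nU] := projT2 (cid (H' N)); apply: nU; apply: hN => /=; exact: leqnn.
Qed.

Definition agree (a b : cantor_space) m := forall i, (i < m)%N -> a i = b i.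

Lemma nested (U : nat -> set cantor_space) (C : set cantor_space) :
  closed C -> (forall k, C (bits k)) -> (forall n, open (U n)) ->
  (forall n k, (n <= k)%N -> U n (bits k)) -> exists y, C y /\ forall n, U n y.
Proof.
move=> cC Cb oU Ub.
have hcyl : forall n k, exists m, (n <= k)%N -> forall y, agree y (bits k) m -> U n y.
  move=> n k; have [nk|nk] := boolP (n <= k)%N.
    have [m hm] : exists m, forall y : cantor_space,
        (forall i, (i < m)%N -> y i = bits k i) -> U n y.
      by apply: cantor_cyl; apply: open_nbhs_nbhs; split; [exact: oU|exact: Ub].
    by exists m => _.
  by exists 0%N => h; move/negP: nk.
pose cylm n k := projT1 (cid (hcyl n k)).
have cylmP n k : (n <= k)%N -> forall y, agree y (bits k) (cylm n k) -> U n y.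
  exact: (projT2 (cid (hcyl n k))).
pose fix km (n : nat) : nat * nat :=
  if n is n'.+1 then
    let k := build (bits (km n').1) (km n').2 n in
    (k, (maxn (cylm n k) (km n').2).+1)
  else (0%N, (cylm 0%N 0%N).+1).
have kn n : (n <= (km n).1)%N.
  by case: n => [//|n] /=; exact: build_ge.
have mS n : ((km n).2 < (km n.+1).2)%N.
  by rewrite /= ltnS leq_maxr.
have mn n : (n < (km n).2)%N.
  elim: n => [//|n IH]; exact: leq_ltn_trans IH (mS n).
have mmono i j : (i <= j)%N -> ((km i).2 <= (km j).2)%N.
  move=> /subnK <-; elim: (j - i)%N => [//|d IH].
  by rewrite addSn; apply: leq_trans IH (ltnW (mS _)).
have ag1 n : agree (bits (km n.+1).1) (bits (km n).1) (km n).2.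
  by move=> i hi; rewrite /bits /= build_digit.
have agd i j : (i <= j)%N -> agree (bits (km j).1) (bits (km i).1) (km i).2.
  move=> /subnK <-; elim: (j - i)%N => [//|d IH] t ht.
  rewrite addSn ag1; first exact: IH.
  by apply: leq_trans ht _; apply: mmono; rewrite leq_addl.
have cyl n y : agree y (bits (km n).1) (km n).2 -> U n y.
  move=> h; apply: cylmP; first exact: kn.
  move=> i hi; apply: h; apply: leq_trans hi _.
  case: n => [|n] /=; first exact: leqnSn.
  by apply: leqW; rewrite leq_maxl.
pose y : cantor_space := fun i => bits (km i).1 i.
have yag n : agree y (bits (km n).1) (km n).2.
  move=> i hi; rewrite /y; have [ni|in_] := leqP n i.
    exact: (agd n i ni).
  rewrite (agd i n (ltnW in_)) //; exact: mn.
exists y; split; last by move=> n; apply: cyl; exact: yag.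
rewrite (closure_id C).1 //= => B /cantor_cyl [m hm].
exists (bits (km m).1); split; first exact: Cb.
apply: hm => i hi; apply: esym; apply: yag.
exact: ltn_trans hi (mn m).
Qed.

Lemma iotaE (Z : Type) : infinite_set [set: Z] -> exists iota : nat -> Z, injective iota.
Proof.
move=> /infiniteP /card_leP [g].
exists (fun n => \val (g (@SigSub _ _ _ n (mem_set I)))).
move=> a b /val_inj h.
have := @inj _ _ _ g _ _ (mem_set I) (mem_set I) h.
by move=> /(congr1 val).
Qed.

Lemma bits_inj : injective bits.
Proof.
move=> a b E; apply: digit_inj => i.
by have := congr1 (fun g : cantor_space => g i) E.
Qed.

Theorem proposition3p16 (Z : discreteTopologicalType) (K : topologicalType)
    (e : Z -> K) :
  infinite_set [set: Z] ->
  is_stone_cech e ->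
  ~ Delta_subspace (~` range e).
Proof.
move=> hinf [cK hK [einj econt eemb] dK ext].
have cl1 (w : K) : closed [set w].
  by apply: accessible_closed_set1; apply: hausdorff_accessible.
have e_open z : open [set e z].
  have [W [oW hW]] := eemb [set z] (discrete_open _).
  suff -> : [set e z] = W by [].
  apply/seteqP; split.
    move=> _ ->; have : (e @` [set z]) (e z) by exists z.
    by rewrite hW => -[].
  move=> w Ww; apply: contrapT => nw.
  have oO : open (W `&` ~` [set e z]) by apply: openI => //; rewrite openC.
  have [p [[Wx nx] [z' _ ezp]]] := dK _ (ex_intro _ w (conj Ww nw)) oO; subst p.
  have : (W `&` range e) (e z') by split => //; exists z'.
  by rewrite -hW => -[z'' hz ez]; apply: nx; rewrite -ez hz.
have closedX : closed (~` range e).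
  rewrite closedC openE => _ [z _ <-].
  apply: filterS (open_nbhs_nbhs (conj (e_open z) erefl)).
  by move=> _ ->; exists z.
have cX : compact (~` range e) by apply: (subclosed_compact closedX cK).
have [iota iinj] := @iotaE Z hinf.
pose lab (n : nat) : nat := if @unpickle (nat * nat)%type n is Some p then p.1 else 0%N.
have labE k j : lab (@pickle (nat * nat)%type (k, j)) = k by rewrite /lab (@pickleK (nat * nat)%type).
pose f (z : Z) : cantor_space :=
  if pselect (exists n, iota n = z) is left h then bits (lab (projT1 (cid h)))
  else bits 0.
have fE n : f (iota n) = bits (lab n).
  rewrite /f; case: pselect => [h|]; last by case; exists n.
  by congr (bits (lab _)); apply: iinj; exact: (projT2 (cid h)).
have fc : continuous f.
  move=> z A /nbhs_singleton Az; apply: filterS (discrete_set1 z).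
  by move=> _ ->.
have [F [Fc FE]] := ext cantor_space f cantor_space_compact cantor_space_hausdorff fc.
have Fsurj k : exists x, ~ range e x /\ F x = bits k.
  pose u (j : nat) := e (iota (@pickle (nat * nat)%type (k, j))).
  have uinj : injective u.
    by move=> a b /einj /iinj /(pcan_inj (@pickleK _)) [].
  have [x [_ clx]] := cK (u @ \oo) _ filterT.
  exists x; split.
    move=> [z _ xz].
    have ev : (u @ \oo) [set w | w <> e z].
      case: (pselect (exists j, u j = e z)) => [[j0 hj0]|nj].
        exists j0.+1 => // j /= hj ujz.
        by have := uinj _ _ (etrans ujz (esym hj0)); lia.
      by exists 0%N => // j _ /= ujz; apply: nj; exists j.
    have nb : nbhs x [set e z] by rewrite -xz; apply: open_nbhs_nbhs; split.
    by have [w [/= nw wz]] := clx _ _ ev nb; apply: nw.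
  apply: contrapT => nFx.
  have nb : nbhs x (F @^-1` (~` [set bits k])).
    apply: (Fc x); apply: open_nbhs_nbhs; split => //; rewrite openC; exact: (accessible_closed_set1 (hausdorff_accessible cantor_space_hausdorff)).
  have ev : (u @ \oo) (range u) by exists 0%N => // j _; exists j.
  have [_ [[j _ <-] /= h]] := clx _ _ ev nb.
  by apply: h; rewrite /u FE fE labE.
move=> Delta.
pose X := ~` range e.
pose D n := [set x | X x /\ exists k, (n <= k)%N /\ F x = bits k].
have DX n : D n `<=` X by move=> x [].
have Ddec n : D n.+1 `<=` D n.
  by move=> x [Xx [k [hk Fk]]]; split => //; exists k; split => //; exact: ltnW.
have D0 : \bigcap_n D n = set0.
  apply/seteqP; split => // x /= Dx.
  have [_ [k [_ Fk]]] := Dx 0%N I.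
  have [_ [k' [hk' Fk']]] := Dx k.+1 I.
  have := @bits_inj _ _ (etrans (esym Fk) Fk'); lia.
have [V [VX Vo Vdec DV V0]] := Delta D DX Ddec D0.
have cXV n : compact (X `\` V n).
  have [W [oW ->]] := Vo n.
  apply: (subclosed_compact _ cX); last by move=> x [].
  have -> : X `\` (W `&` X) = X `&` ~` W.
    by apply/seteqP; split => x [Xx h]; split => //; [move=> Wx; apply: h|case].
  by apply: closedI => //; rewrite closedC.
pose B n := F @` (X `\` V n).
have cB n : closed (B n).
  apply: compact_closed; first exact: cantor_space_hausdorff.
  by apply: continuous_compact => //; apply: continuous_subspaceT.
have cC : closed (F @` X).
  apply: compact_closed; first exact: cantor_space_hausdorff.
  by apply: continuous_compact => //; apply: continuous_subspaceT.
have [y [[x Xx Fxy] hy]] := @nested (fun n => ~` B n) (F @` X) cC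
  (fun k => let: ex_intro x (conj h1 h2) := Fsurj k in ex_intro2 _ _ x h1 h2)
  (fun n => eq_ind _ id (cB n) _ (esym (openC (B n))))
  (fun n k nk => fun hb => let: ex_intro2 x0 (conj Xx0 nV) Fx0 := hb in
     nV (DV n x0 (conj Xx0 (ex_intro _ k (conj nk Fx0))))).
have : (\bigcap_n V n) x.
  move=> n _; apply: contrapT => nV; apply: (hy n); exists x => //.
by rewrite V0.
Qed.
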